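(* Let $\mathbb{K}$ be a field of characteristic zero, let $t,s\in\mathbb{K}\setminus\{0,1\}$, and let $\mathfrak{g}$ be a finite-dimensional non-perfect Lie algebra over $\mathbb{K}$ (i.e. $\mathfrak{g}^{(2)}\neq\mathfrak{g}$). Then $\mathcal{D}(t,1,0)(\mathfrak{g})$ and $\mathcal{D}(s,1,0)(\mathfrak{g})$ are isomorphic vector spaces.
   Context: For a Lie algebra $\mathfrak{g}=(V,\mu)$, the derived algebra $\mathfrak{g}^{(2)}$ is the linear span of all products $\mu(X,Y)$. For $t\in\mathbb{K}$, $\mathcal{D}(t,1,0)(\mathfrak{g})$ denotes the space of $(t,1,0)$-derivations of $\mathfrak{g}$: linear maps $D:V\to V$ with $tD\mu(X,Y)=\mu(DX,Y)$ for all $X,Y\in V$. *)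

(* Defs.v *)
From HB Require Import structures.
From mathcomp Require Import all_boot all_order all_algebra.
Set Implicit Arguments. Unset Strict Implicit. Unset Printing Implicit Defensive.
Import GRing.Theory.
Local Open Scope ring_scope.

Definition is_lie_bracket (K : fieldType) (V : vectType K) (mu : V -> V -> V) : Prop :=
  [/\ (forall X (a : K) Y Z, mu X (a *: Y + Z) = a *: mu X Y + mu X Z),
      (forall Y (a : K) X Z, mu (a *: X + Z) Y = a *: mu X Y + mu Z Y),
      (forall X, mu X X = 0) &
      (forall X Y Z, mu X (mu Y Z) + mu Y (mu Z X) + mu Z (mu X Y) = 0)].

(* membership in the derived algebra g^(2) = span of all products mu X Y *)
Definition in_derived (K : fieldType) (V : vectType K) (mu : V -> V -> V) (v : V) : Prop :=
  exists s : seq (V * V), v = \sum_(p <- s) mu p.1 p.2.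

Definition non_perfect (K : fieldType) (V : vectType K) (mu : V -> V -> V) : Prop :=
  exists v : V, ~ in_derived mu v.

Definition is_t10_derivation (K : fieldType) (V : vectType K) (mu : V -> V -> V)
    (t : K) (D : 'End(V)) : Prop :=
  forall X Y, t *: D (mu X Y) = mu (D X) Y.

Definition iso_subspaces (K : fieldType) (W : lmodType K) (P Q : W -> Prop) : Prop :=
  exists (f g : W -> W),
    (forall x y, P x -> P y -> f (x + y) = f x + f y) /\
    (forall (a : K) x, P x -> f (a *: x) = a *: f x) /\
    (forall x, P x -> Q (f x)) /\
    (forall y, Q y -> P (g y)) /\
    (forall x, P x -> g (f x) = x) /\
    (forall y, Q y -> f (g y) = y).

(* Main.v *)
Require Import Defs.
From HB Require Import structures.
From mathcomp Require Import all_boot all_order all_algebra.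
From mathcomp Require Import ring.
Import GRing.Theory.
Local Open Scope ring_scope.

Section Aux.
Variables (K : fieldType) (V : vectType K) (mu : V -> V -> V).
Hypothesis Hmu : is_lie_bracket mu.

Lemma muDr X Y Z : mu X (Y + Z) = mu X Y + mu X Z.
Proof. case: (Hmu : [/\ _, _, _ & _]) => Hr _ _ _; have h := Hr X 1 Y Z; rewrite !scale1r in h; exact h. Qed.
Lemma muDl X Y Z : mu (Y + Z) X = mu Y X + mu Z X.
Proof. case: (Hmu : [/\ _, _, _ & _]) => _ Hl _ _; have h := Hl X 1 Y Z; rewrite !scale1r in h; exact h. Qed.
Lemma mu0r X : mu X 0 = 0.
Proof. have h := muDr X 0 0; rewrite addr0 in h; apply: (addrI (mu X 0)); by rewrite addr0 -h. Qed.
Lemma mu0l X : mu 0 X = 0.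
Proof. have h := muDl X 0 0; rewrite addr0 in h; apply: (addrI (mu 0 X)); by rewrite addr0 -h. Qed.
Lemma muZr X a Y : mu X (a *: Y) = a *: mu X Y.
Proof. case: (Hmu : [/\ _, _, _ & _]) => Hr _ _ _; have h := Hr X a Y 0; rewrite addr0 mu0r addr0 in h; exact h. Qed.
Lemma muZl X a Y : mu (a *: Y) X = a *: mu Y X.
Proof. case: (Hmu : [/\ _, _, _ & _]) => _ Hl _ _; have h := Hl X a Y 0; rewrite addr0 mu0l addr0 in h; exact h. Qed.
Lemma muNr X Y : mu X (- Y) = - mu X Y.
Proof. by rewrite -scaleN1r muZr scaleN1r. Qed.
Lemma muNl X Y : mu (- Y) X = - mu Y X.
Proof. by rewrite -scaleN1r muZl scaleN1r. Qed.
Lemma mu_anti X Y : mu X Y = - mu Y X.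
Proof.
case: (Hmu : [/\ _, _, _ & _]) => _ _ Ha _.
have := Ha (X + Y); rewrite muDl !muDr !Ha add0r addr0 => /eqP.
by rewrite addr_eq0 => /eqP.
Qed.
Lemma mu_suml I (r : seq I) (F : I -> V) Y :
  mu (\sum_(i <- r) F i) Y = \sum_(i <- r) mu (F i) Y.
Proof. exact: (big_morph (fun x => mu x Y) (fun a b => muDl Y a b) (mu0l Y)). Qed.
Lemma mu_sumr I (r : seq I) (F : I -> V) Y :
  mu Y (\sum_(i <- r) F i) = \sum_(i <- r) mu Y (F i).
Proof. exact: (big_morph (fun x => mu Y x) (fun a b => muDr Y a b) (mu0r Y)). Qed.

Variables (t : K) (D : 'End(V)).
Hypotheses (t0 : t != 0) (t1 : t != 1) (HD : is_t10_derivation mu t D).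

Lemma key3 X Y Z : D (mu X (mu Y Z)) = 0.
Proof.
case: (Hmu : [/\ _, _, _ & _]) => _ _ _ HJ.
set E := fun X Y Z => D (mu X (mu Y Z)).
have J1 : forall X Y Z, E X Y Z + E Y Z X + E Z X Y = 0.
  by move=> A B C; rewrite /E -!linearD HJ linear0.
have J2 : forall X Y Z, t *: E X Y Z - t ^+ 2 *: E Y X Z + t ^+ 2 *: E Z X Y = 0.
  move=> A B C; have := HJ (D A) B C.
  have h1 : mu (D A) (mu B C) = t *: E A B C by rewrite /E HD.
  have h2 : mu B (mu C (D A)) = - t ^+ 2 *: E B A C.
    rewrite (mu_anti C) -HD muNr muZr (mu_anti B) -HD scalerN opprK scalerA -expr2.
    by rewrite /E (mu_anti (mu A C)) linearN scalerN -scaleNr.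
  have h3 : mu C (mu (D A) B) = t ^+ 2 *: E C A B.
    by rewrite -HD muZr (mu_anti C) -HD scalerN scalerA -expr2 /E (mu_anti (mu A B) C) linearN scalerN opprK.
  by rewrite h1 h2 h3 scaleNr.
have hb : E Y X Z = - E Y Z X by rewrite /E (mu_anti X Z) muNr linearN.
have h2 := J2 X Y Z; rewrite hb scalerN opprK in h2.
have h3 : t *: (E X Y Z + t *: (E Y Z X + E Z X Y)) = 0.
  by rewrite scalerDr scalerA -expr2 scalerDr addrA.
move/eqP: h3; rewrite scaler_eq0 (negbTE t0) /= => /eqP h3.
have hbc : E Y Z X + E Z X Y = - E X Y Z.
  by apply/eqP; rewrite -addr_eq0 addrC addrA J1.
rewrite hbc scalerN -{1}[E X Y Z]scale1r -scalerBl in h3.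
move/eqP: h3; rewrite scaler_eq0 => /orP [|/eqP //].
by rewrite subr_eq0 eq_sym (negbTE t1).
Qed.
Lemma key_center A B Y : mu (D (mu A B)) Y = 0.
Proof.
have E : forall x, D (- x) = - D x by move=> x; rewrite linearN.
by rewrite -HD (mu_anti (mu A B)) E key3 oppr0 scaler0. Qed.
End Aux.

Section Main.
Variables (K : fieldType) (V : vectType K) (mu : V -> V -> V).
Hypothesis Hmu : is_lie_bracket mu.

Let S := [seq mu x y | x <- vbasis (fullv : {vspace V}), y <- vbasis (fullv : {vspace V})].
Let U := (<<S>>)%VS.
Let P := projv U.

Lemma mu_inU A B : mu A B \in U.
Proof.
rewrite (coord_vbasis (memvf A)) (coord_vbasis (memvf B)) mu_suml //.
apply: memv_suml => i _; rewrite muZl //; apply: memvZ.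
rewrite mu_sumr //; apply: memv_suml => j _; rewrite muZr //; apply: memvZ.
apply: memv_span; apply: allpairs_f; apply: mem_nth; by rewrite size_tuple.
Qed.

Lemma PP v : P (P v) = P v.
Proof. by rewrite /P projv_id // memv_proj. Qed.

Lemma Pmu A B : P (mu A B) = mu A B.
Proof. by rewrite /P projv_id // mu_inU. Qed.

Lemma UD t D : t != 0 -> t != 1 -> is_t10_derivation mu t D ->
  forall v Y, mu (D (P v)) Y = 0.
Proof.
move=> t0 t1 HD v Y.
have Hu : P v \in span (in_tuple S) by apply: memv_proj.
rewrite (coord_span Hu) linear_sum mu_suml //; apply: big1 => i _.
rewrite linearZ muZl //.
have : (in_tuple S)`_i \in S by apply: mem_nth; exact: ltn_ord.
case/allpairsP => -[x y] [_ _ ->] /=.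
by rewrite (@key_center _ _ _ Hmu _ _ t0 t1 HD) scaler0.
Qed.

Definition Fm (t s : K) (D : 'End(V)) : 'End(V) := (D + (t / s - 1) *: (D \o P))%VF.

Lemma Fm_der t s D : t != 0 -> t != 1 -> s != 0 -> is_t10_derivation mu t D ->
  is_t10_derivation mu s (Fm t s D).
Proof.
move=> t0 t1 s0 HD X Y.
rewrite /Fm !(add_lfunE, scale_lfunE, comp_lfunE) Pmu.
rewrite -{1}[D (mu X Y)]scale1r -scalerDl addrC subrK scalerA mulrC divfK // HD.
by rewrite muDl // muZl // (@UD t D t0 t1 HD) scaler0 addr0.
Qed.

End Main.

Lemma scal_id (K : fieldType) (t s : K) : t != 0 -> s != 0 ->
  (t / s - 1) + (s / t - 1) * (1 + (t / s - 1)) = 0.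
Proof. by move=> t0 s0; field; apply/andP; split. Qed.

Theorem theorem3p5 (K : fieldType) (V : vectType K) (mu : V -> V -> V) (t s : K) :
  [pchar K] =i pred0 ->
  t != 0 -> t != 1 -> s != 0 -> s != 1 ->
  is_lie_bracket mu ->
  non_perfect mu ->
  iso_subspaces (is_t10_derivation mu t) (is_t10_derivation mu s).
Proof.
move=> _ t0 t1 s0 s1 Hmu _.
exists (@Fm K V mu t s), (@Fm K V mu s t).
split; [|split;[|split;[|split;[|split]]]].
- move=> x y _ _; apply/lfunP => v.
  by rewrite /Fm !(add_lfunE, scale_lfunE, comp_lfunE) scalerDr addrACA.
- move=> a x _; apply/lfunP => v.
  by rewrite /Fm !(add_lfunE, scale_lfunE, comp_lfunE) scalerDr !scalerA (mulrC a).
- by move=> D HD; apply: Fm_der.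
- by move=> D HD; apply: Fm_der.
- move=> D _; apply/lfunP => v.
  rewrite /Fm !(add_lfunE, scale_lfunE, comp_lfunE) PP.
  set w := D (projv _ v).
  rewrite -addrA -{2}[w]scale1r -scalerDl scalerA -scalerDl scal_id //.
  by rewrite scale0r addr0.
- move=> D _; apply/lfunP => v.
  rewrite /Fm !(add_lfunE, scale_lfunE, comp_lfunE) PP.
  set w := D (projv _ v).
  rewrite -addrA -{2}[w]scale1r -scalerDl scalerA -scalerDl scal_id //.
  by rewrite scale0r addr0.
Qed.
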